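(* Let $p,q>0$, $x\ge0$, $0\le y\le1$. Then both $y_k=B_{k,q}(x,y)$ and $y_k=\bar B_{k,q}(x,y)$ satisfy the four-term recurrence $$c_3y_{p+3}+c_2y_{p+2}+c_1y_{p+1}+c_0y_p=0,$$ where $$c_0=(p+q)y^2,\quad c_1=-y\left(p+1-\tfrac12xy+y(p+q)\right),\quad c_2=y\left(p+1-\tfrac12xy\right)-\tfrac12xy,\quad c_3=\tfrac12xy .$$
   Context: For $p,q>0$ and $0\le y\le 1$, $I_y(p,q)=\frac{1}{B(p,q)}\int_0^y t^{p-1}(1-t)^{q-1}\,dt$ is the regularized incomplete beta function, with $B(p,q)=\Gamma(p)\Gamma(q)/\Gamma(p+q)$. The cumulative noncentral beta distribution is $B_{p,q}(x,y)=e^{-x/2}\sum_{j=0}^\infty \frac{1}{j!}\left(\frac x2\right)^j I_y(p+j,q)$ for $x\ge0$, and its complement is $\bar B_{p,q}(x,y)=1-B_{p,q}(x,y)$. *)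

(* Defs.v *)
From Stdlib Require Import Arith Reals ClassicalEpsilon.
Open Scope R_scope.

Definition beta_integrand (p q : R) (t : R) : R :=
  Rpower t (p - 1) * Rpower (1 - t) (q - 1).

Definition beta_partial_integrals (p q y : R) (v : R) : Prop :=
  v = 0 \/
  exists (a b : R) (pr : Riemann_integrable (beta_integrand p q) a b),
    0 < a /\ a <= b /\ b < y /\ b < 1 /\ v = RiemannInt pr.

(* Improper integral  \int_0^y t^(p-1)(1-t)^(q-1) dt  (0 <= y <= 1).
   The integrand is nonnegative and continuous on (0,1), so the (possibly
   improper) integral is the supremum of its integrals over compact
   subintervals. *)
Definition incbeta_int (p q y : R) : R :=
  epsilon (inhabits 0) (fun v => is_lub (beta_partial_integrals p q y) v).

Definition Beta (p q : R) : R := incbeta_int p q 1.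

Definition I_reg (y p q : R) : R := incbeta_int p q y / Beta p q.

Definition series_sum (u : nat -> R) : R :=
  epsilon (inhabits 0) (fun l => infinite_sum u l).

Definition ncbeta (p q x y : R) : R :=
  exp (- x / 2) *
  series_sum (fun j => / INR (Factorial.fact j) * (x / 2) ^ j * I_reg y (p + INR j) q).

Definition ncbeta_c (p q x y : R) : R := 1 - ncbeta p q x y.

(* Main.v *)
Require Import Defs.
From Stdlib Require Import Reals Lra Lia ClassicalEpsilon Classical.
From Coquelicot Require Import Coquelicot.
Open Scope R_scope.


Lemma rp_pos x r : 0 < Rpower x r.
Proof. unfold Rpower; apply exp_pos. Qed.

Lemma scalR (a b : R) : scal a b = a * b.
Proof. reflexivity. Qed.
Lemma multR (a b : R) : mult a b = a * b.
Proof. reflexivity. Qed.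
Lemma plusR (a b : R) : plus a b = a + b.
Proof. reflexivity. Qed.
Lemma minusR (a b : R) : minus a b = a - b.
Proof. reflexivity. Qed.

Lemma rp_succ t r : 0 < t -> Rpower t r = t * Rpower t (r - 1).
Proof.
  intros Ht. replace r with ((r - 1) + 1) at 1 by ring.
  rewrite Rpower_plus, Rpower_1 by lra. ring.
Qed.

Lemma der_rp t r : 0 < t -> is_derive (fun s => Rpower s r) t (r * Rpower t (r - 1)).
Proof. intros Ht. apply is_derive_Reals. now apply derivable_pt_lim_power. Qed.

Lemma der_rp1 t r : t < 1 ->
  is_derive (fun s => Rpower (1 - s) r) t (- (r * Rpower (1 - t) (r - 1))).
Proof.
  intros Ht.
  assert (H1 : is_derive (fun s : R => 1 - s) t (-1)).
  { apply is_derive_Reals. replace (-1) with (0 - 1) by ring.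
    apply derivable_pt_lim_minus. apply derivable_pt_lim_const. apply derivable_pt_lim_id. }
  pose proof (is_derive_comp (fun s => Rpower s r) (fun s => 1 - s) t _ _ (der_rp (1 - t) r ltac:(lra)) H1) as H.
  replace (- (r * Rpower (1 - t) (r - 1))) with (scal (-1) (r * Rpower (1 - t) (r - 1))).
  exact H. rewrite scalR. lra.
Qed.

Lemma cont_rp t r : 0 < t -> continuous (fun s => Rpower s r) t.
Proof. intros H. apply (@ex_derive_continuous R_AbsRing R_NormedModule). eexists. now apply der_rp. Qed.

Lemma cont_rp1 t r : t < 1 -> continuous (fun s => Rpower (1 - s) r) t.
Proof. intros H. apply (@ex_derive_continuous R_AbsRing R_NormedModule). eexists. now apply der_rp1. Qed.

Lemma cont_F a q t : 0 < t < 1 -> continuous (beta_integrand a q) t.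
Proof.
  intros H. unfold beta_integrand.
  apply (continuous_mult (fun s => Rpower s (a - 1)) (fun s => Rpower (1 - s) (q - 1))).
  apply cont_rp; lra. apply cont_rp1; lra.
Qed.

Lemma F_pos a q t : 0 < beta_integrand a q t.
Proof. unfold beta_integrand. apply Rmult_lt_0_compat; apply rp_pos. Qed.

Definition gB a q t := Rpower t a * Rpower (1 - t) q.

Lemma der_g a q t : 0 < t < 1 ->
  is_derive (gB a q) t (a * beta_integrand a q t - (a + q) * beta_integrand (a + 1) q t).
Proof.
  intros H. unfold gB.
  pose proof (is_derive_mult (fun s => Rpower s a) (fun s => Rpower (1 - s) q) t _ _
     (der_rp t a ltac:(lra)) (der_rp1 t q ltac:(lra)) ltac:(intros; apply Rmult_comm)) as D.
  match type of D with is_derive _ _ ?v => replace (a * beta_integrand a q t - (a + q) * beta_integrand (a + 1) q t) with v end.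
  exact D.
  rewrite plusR, !multR. unfold beta_integrand.
  match goal with |- ?x = ?y => change (@eq R x y) end.
  replace (a + 1 - 1) with a by ring.
  rewrite (rp_succ t a) by lra. rewrite (rp_succ (1 - t) q) by lra. change (mult (t * Rpower t (a - 1)) (- (q * Rpower (1 - t) (q - 1)))) with ((t * Rpower t (a - 1)) * (- (q * Rpower (1 - t) (q - 1)))). ring.
Qed.

Lemma exp_mono x y : x <= y -> exp x <= exp y.
Proof. intros [H|H]. left; now apply exp_increasing. subst; lra. Qed.

Definition Kc r := exp (Rabs r * ln 2).

Lemma Kc_ge1 r : 1 <= Kc r.
Proof.
  unfold Kc. rewrite <- exp_0. apply exp_mono.
  pose proof (Rabs_pos r). pose proof ln_lt_2. nra.
Qed.

Lemma rp_half s r : / 2 <= s <= 1 -> Rpower s r <= Kc r.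
Proof.
  intros H. unfold Rpower, Kc. apply exp_mono.
  assert (L1 : ln s <= 0) by (rewrite <- ln_1; apply ln_le; lra).
  assert (L2 : - ln 2 <= ln s) by (rewrite <- ln_Rinv by lra; apply ln_le; lra).
  destruct (Rle_or_lt 0 r).
  - rewrite Rabs_pos_eq by lra. pose proof ln_lt_2. nra.
  - rewrite Rabs_left by lra. nra.
Qed.

Lemma rp_le1 s r : 0 < s <= 1 -> 0 <= r -> Rpower s r <= 1.
Proof.
  intros H Hr. replace 1 with (Rpower 1 r).
  apply Rle_Rpower_l; lra. unfold Rpower. rewrite ln_1, Rmult_0_r. apply exp_0.
Qed.

Lemma exF a q al be : 0 < al -> al <= be -> be < 1 -> ex_RInt (beta_integrand a q) al be.
Proof.
  intros H1 H2 H3. apply (@ex_RInt_continuous R_CompleteNormedModule). intros z Hz.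
  rewrite Rmin_left, Rmax_right in Hz by lra. apply cont_F. lra.
Qed.

Definition SI a q al be := RInt (beta_integrand a q) al be.

Lemma S_nonneg a q al be : 0 < al -> al <= be -> be < 1 -> 0 <= SI a q al be.
Proof.
  intros. unfold SI. apply RInt_ge_0; auto. now apply exF.
  intros; left; apply F_pos.
Qed.

Lemma S_mono a q al be al' be' : 0 < al' -> al' <= al -> al <= be -> be <= be' -> be' < 1 ->
  SI a q al be <= SI a q al' be'.
Proof.
  intros. unfold SI.
  rewrite <- (RInt_Chasles _ al' al be') by (apply exF; lra).
  rewrite <- (RInt_Chasles _ al be be') by (apply exF; lra).
  rewrite !plusR.
  assert (0 <= RInt (beta_integrand a q) al' al) by (apply (S_nonneg a q); lra).
  assert (0 <= RInt (beta_integrand a q) be be') by (apply (S_nonneg a q); lra).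
  change (plus ?x ?y) with (x + y). lra.
Qed.

Lemma S_ibp a q al be : 0 < al -> al <= be -> be < 1 ->
  a * SI a q al be - (a + q) * SI (a + 1) q al be = gB a q be - gB a q al.
Proof.
  intros. unfold SI.
  assert (HI : is_RInt (fun t => a * beta_integrand a q t - (a + q) * beta_integrand (a + 1) q t)
            al be (gB a q be - gB a q al)).
  { rewrite <- minusR. apply (@is_RInt_derive R_CompleteNormedModule).
    - intros x Hx. rewrite Rmin_left, Rmax_right in Hx by lra. apply der_g. lra.
    - intros x Hx. rewrite Rmin_left, Rmax_right in Hx by lra.
      apply (continuous_minus (fun t => a * beta_integrand a q t) (fun t => (a + q) * beta_integrand (a + 1) q t));
      apply (continuous_scal_r _ (fun t => beta_integrand _ q t)); apply cont_F; lra. }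
  apply (@is_RInt_unique R_CompleteNormedModule) in HI. rewrite <- HI.
  assert (E1 : RInt (fun t => a * beta_integrand a q t) al be = a * RInt (beta_integrand a q) al be).
  { exact (@RInt_scal R_CompleteNormedModule (beta_integrand a q) al be a (exF a q al be ltac:(lra) ltac:(lra) ltac:(lra))). }
  assert (E2 : RInt (fun t => (a + q) * beta_integrand (a + 1) q t) al be = (a + q) * RInt (beta_integrand (a + 1) q) al be).
  { exact (@RInt_scal R_CompleteNormedModule (beta_integrand (a + 1) q) al be (a + q) (exF (a + 1) q al be ltac:(lra) ltac:(lra) ltac:(lra))). }
  assert (E3 : RInt (fun t => a * beta_integrand a q t - (a + q) * beta_integrand (a + 1) q t) al be
     = RInt (fun t => a * beta_integrand a q t) al be - RInt (fun t => (a + q) * beta_integrand (a + 1) q t) al be).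
  { apply (@RInt_minus R_CompleteNormedModule (fun t => a * beta_integrand a q t) (fun t => (a + q) * beta_integrand (a + 1) q t));
    apply (@ex_RInt_scal R_CompleteNormedModule); apply exF; lra. }
  rewrite E3, E1, E2. reflexivity.
Qed.

Definition Cb a q := (Kc (q - 1) + Kc (a - 1)) * (/ a + / q).

Lemma F_maj a q t : 0 < a -> 0 < q -> 0 < t < 1 ->
  beta_integrand a q t <= Cb a q * (a * Rpower t (a - 1) + q * Rpower (1 - t) (q - 1)).
Proof.
  intros Ha Hq Ht. unfold beta_integrand, Cb.
  pose proof (rp_pos t (a - 1)) as P1. pose proof (rp_pos (1 - t) (q - 1)) as P2.
  pose proof (Kc_ge1 (q - 1)). pose proof (Kc_ge1 (a - 1)).
  assert (Ia : 0 < / a) by (apply Rinv_0_lt_compat; lra).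
  assert (Iq : 0 < / q) by (apply Rinv_0_lt_compat; lra).
  assert (Ea : / a * a = 1) by (field; lra).
  assert (Eq : / q * q = 1) by (field; lra).
  assert (M : Rpower t (a - 1) + Rpower (1 - t) (q - 1) <=
              (/ a + / q) * (a * Rpower t (a - 1) + q * Rpower (1 - t) (q - 1))).
  { assert (0 <= / q * a * Rpower t (a - 1)) by (apply Rmult_le_pos; [apply Rmult_le_pos|]; lra).
    assert (0 <= / a * q * Rpower (1 - t) (q - 1)) by (apply Rmult_le_pos; [apply Rmult_le_pos|]; lra).
    replace ((/ a + / q) * (a * Rpower t (a - 1) + q * Rpower (1 - t) (q - 1))) with
      ((/ a * a) * Rpower t (a - 1) + (/ q * q) * Rpower (1 - t) (q - 1)
       + / q * a * Rpower t (a - 1) + / a * q * Rpower (1 - t) (q - 1)) by ring.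
    rewrite Ea, Eq. lra. }
  assert (B : Rpower t (a - 1) * Rpower (1 - t) (q - 1) <=
              (Kc (q - 1) + Kc (a - 1)) * (Rpower t (a - 1) + Rpower (1 - t) (q - 1))).
  { destruct (Rle_or_lt t (/ 2)).
    - pose proof (rp_half (1 - t) (q - 1) ltac:(lra)). nra.
    - pose proof (rp_half t (a - 1) ltac:(lra)). nra. }
  eapply Rle_trans. exact B. rewrite Rmult_assoc. apply Rmult_le_compat_l. lra. exact M.
Qed.

Lemma S_bound a q al be : 0 < a -> 0 < q -> 0 < al -> al <= be -> be < 1 ->
  SI a q al be <= 2 * Cb a q.
Proof.
  intros Ha Hq H1 H2 H3.
  assert (R1 : is_RInt (fun t => a * Rpower t (a - 1)) al be (Rpower be a - Rpower al a)).
  { change (is_RInt (fun t => a * Rpower t (a - 1)) al be (minus (Rpower be a) (Rpower al a))).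
    apply (@is_RInt_derive R_CompleteNormedModule (fun s => Rpower s a)).
    - intros x Hx. rewrite Rmin_left, Rmax_right in Hx by lra. apply der_rp. lra.
    - intros x Hx. rewrite Rmin_left, Rmax_right in Hx by lra.
      apply (continuous_scal_r a (fun t => Rpower t (a - 1))). apply cont_rp. lra. }
  assert (R2 : is_RInt (fun t => q * Rpower (1 - t) (q - 1)) al be
                 ((- Rpower (1 - be) q) - (- Rpower (1 - al) q))).
  { change (is_RInt (fun t => q * Rpower (1 - t) (q - 1)) al be (minus (- Rpower (1 - be) q) (- Rpower (1 - al) q))).
    apply (@is_RInt_derive R_CompleteNormedModule (fun s => - Rpower (1 - s) q)).
    - intros x Hx. rewrite Rmin_left, Rmax_right in Hx by lra.
      pose proof (is_derive_opp _ _ _ (der_rp1 x q ltac:(lra))) as D.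
      replace (q * Rpower (1 - x) (q - 1)) with (opp (- (q * Rpower (1 - x) (q - 1)))).
      exact D. change (opp ?z) with (- z). lra.
    - intros x Hx. rewrite Rmin_left, Rmax_right in Hx by lra.
      apply (continuous_scal_r q (fun t => Rpower (1 - t) (q - 1))). apply cont_rp1. lra. }
  pose proof (is_RInt_plus _ _ _ _ _ _ R1 R2) as R3.
  pose proof (is_RInt_scal _ _ _ (Cb a q) _ R3) as R4.
  assert (Le : SI a q al be <= RInt (fun y => scal (Cb a q) (plus (a * Rpower y (a - 1)) (q * Rpower (1 - y) (q - 1)))) al be).
  { apply RInt_le. lra. apply exF; lra. eexists; exact R4.
    intros x Hx. rewrite scalR, plusR. apply F_maj; lra. }
  match type of Le with _ <= ?r => replace r with (Cb a q * ((Rpower be a - Rpower al a) + ((- Rpower (1 - be) q) - (- Rpower (1 - al) q)))) in Le end.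
  2: { symmetry. apply (@is_RInt_unique R_CompleteNormedModule). exact R4. }
  pose proof (rp_le1 be a ltac:(lra) ltac:(lra)). pose proof (rp_pos al a).
  pose proof (rp_le1 (1 - al) q ltac:(lra) ltac:(lra)). pose proof (rp_pos (1 - be) q).
  assert (0 <= Cb a q).
  { unfold Cb. pose proof (Kc_ge1 (q - 1)). pose proof (Kc_ge1 (a - 1)).
    assert (0 < / a) by (apply Rinv_0_lt_compat; lra).
    assert (0 < / q) by (apply Rinv_0_lt_compat; lra). nra. }
  nra.
Qed.

Lemma pow_le1 r n : 0 <= r <= 1 -> r ^ n <= 1.
Proof.
  intros H. induction n; simpl. lra.
  pose proof (pow_le r n ltac:(lra)). nra.
Qed.

Lemma exp_mul_INR x n : exp (x * INR n) = exp x ^ n.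
Proof.
  induction n. simpl. rewrite Rmult_0_r. apply exp_0.
  rewrite S_INR, Rmult_plus_distr_l, Rmult_1_r, exp_plus, IHn. simpl. ring.
Qed.

Definition e1 := exp (Ropp 1).
Definition E n := e1 ^ S n.

Lemma e1_bounds : 0 < e1 < / 2.
Proof.
  unfold e1. split. apply exp_pos. rewrite exp_Ropp.
  pose proof (exp_ineq1 1 ltac:(lra)). apply Rinv_lt_contravar; lra.
Qed.

Lemma E_bounds n : 0 < E n < / 2.
Proof.
  pose proof e1_bounds. unfold E. split. apply pow_lt; lra.
  simpl. pose proof (pow_le1 e1 n ltac:(lra)). pose proof (pow_le e1 n ltac:(lra)). nra.
Qed.

Lemma E_lim : is_lim_seq E 0.
Proof.
  pose proof e1_bounds. unfold E.
  apply (is_lim_seq_incr_1 (fun n => e1 ^ n)). apply is_lim_seq_geom.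
  rewrite Rabs_pos_eq; lra.
Qed.

Lemma rp_E n r : Rpower (E n) r = exp (- r) ^ S n.
Proof.
  unfold Rpower, E. rewrite ln_pow by (unfold e1; apply exp_pos).
  unfold e1. rewrite ln_exp. rewrite <- exp_mul_INR. f_equal. ring.
Qed.

Lemma rpE_lim r : 0 < r -> is_lim_seq (fun n => Rpower (E n) r) 0.
Proof.
  intros Hr. apply (is_lim_seq_ext (fun n => exp (- r) ^ S n)). intros; now rewrite rp_E.
  apply (is_lim_seq_incr_1 (fun n => exp (- r) ^ n)). apply is_lim_seq_geom.
  rewrite Rabs_pos_eq by (left; apply exp_pos). rewrite <- exp_0. apply exp_increasing. lra.
Qed.

Lemma inP a q y al be : 0 < al -> al <= be -> be < y -> be < 1 ->
  beta_partial_integrals a q y (SI a q al be).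
Proof.
  intros. right. exists al, be, (ex_RInt_Reals_0 _ _ _ (exF a q al be ltac:(lra) ltac:(lra) ltac:(lra))).
  repeat split; try lra. unfold SI. apply RInt_Reals.
Qed.

Lemma P_elem a q y v : beta_partial_integrals a q y v ->
  v = 0 \/ exists al be, 0 < al /\ al <= be /\ be < y /\ be < 1 /\ v = SI a q al be.
Proof.
  intros [H | (al & be & pr & H1 & H2 & H3 & H4 & H5)]. now left.
  right. exists al, be. repeat split; auto. rewrite H5. unfold SI. symmetry. apply RInt_Reals.
Qed.

Lemma P_bound a q y v : 0 < a -> 0 < q -> beta_partial_integrals a q y v -> v <= 2 * Cb a q.
Proof.
  intros Ha Hq H. destruct (P_elem _ _ _ _ H) as [-> | (al & be & H1 & H2 & H3 & H4 & ->)].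
  - pose proof (S_bound a q (/4) (/2) Ha Hq ltac:(lra) ltac:(lra) ltac:(lra)).
    pose proof (S_nonneg a q (/4) (/2) ltac:(lra) ltac:(lra) ltac:(lra)). lra.
  - apply S_bound; lra.
Qed.

Lemma J_lub a q y : 0 < a -> 0 < q -> is_lub (beta_partial_integrals a q y) (incbeta_int a q y).
Proof.
  intros Ha Hq. unfold incbeta_int. apply epsilon_spec.
  destruct (completeness (beta_partial_integrals a q y)) as [m Hm].
  - exists (2 * Cb a q). intros v Hv. now apply (P_bound a q y).
  - exists 0. now left.
  - now exists m.
Qed.

Lemma J_nonneg a q y : 0 < a -> 0 < q -> 0 <= incbeta_int a q y.
Proof. intros. destruct (J_lub a q y) as [H1 H2]; auto. apply H1. now left. Qed.

Lemma J_le1 a q y : 0 < a -> 0 < q -> y <= 1 -> incbeta_int a q y <= incbeta_int a q 1.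
Proof.
  intros Ha Hq Hy. destruct (J_lub a q y) as [H1 H2]; auto. apply H2.
  intros v Hv. destruct (J_lub a q 1) as [H3 H4]; auto. apply H3.
  destruct (P_elem _ _ _ _ Hv) as [-> | (al & be & ? & ? & ? & ? & ->)]. now left.
  apply inP; lra.
Qed.

Lemma J_zero a q y : 0 < a -> 0 < q -> y <= 0 -> incbeta_int a q y = 0.
Proof.
  intros Ha Hq Hy. apply Rle_antisym. 2: now apply J_nonneg.
  destruct (J_lub a q y) as [H1 H2]; auto. apply H2.
  intros v Hv. destruct (P_elem _ _ _ _ Hv) as [-> | (al & be & ? & ? & ? & ? & ->)]. lra. lra.
Qed.

Lemma B_pos a q : 0 < a -> 0 < q -> 0 < Beta a q.
Proof.
  intros Ha Hq. unfold Beta. destruct (J_lub a q 1) as [H1 H2]; auto.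
  apply Rlt_le_trans with (SI a q (/4) (/2)). 2: apply H1, inP; lra.
  unfold SI. apply RInt_gt_0. lra. intros; apply F_pos.
  intros; apply cont_F; lra.
Qed.

Lemma J_lim a q y : 0 < a -> 0 < q -> 0 < y <= 1 ->
  is_lim_seq (fun n => SI a q (y * E n) (y * (1 - E n))) (incbeta_int a q y).
Proof.
  intros Ha Hq Hy. destruct (J_lub a q y) as [H1 H2]; auto.
  assert (Sn_in : forall n, beta_partial_integrals a q y (SI a q (y * E n) (y * (1 - E n)))).
  { intros n. pose proof (E_bounds n). apply inP; nra. }
  assert (Sn_nn : forall n, 0 <= SI a q (y * E n) (y * (1 - E n))).
  { intros n. pose proof (E_bounds n). apply S_nonneg; nra. }
  apply is_lim_seq_spec. intros eps.
  assert (Ex : exists v, beta_partial_integrals a q y v /\ incbeta_int a q y - eps < v).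
  { apply NNPP. intros Hn. assert (incbeta_int a q y <= incbeta_int a q y - eps).
    { apply H2. intros v Hv. apply Rnot_lt_le. intros Hl. apply Hn. now exists v. }
    destruct eps; simpl in *; lra. }
  destruct Ex as (v & Hv & Hlt).
  destruct (P_elem _ _ _ _ Hv) as [-> | (al & be & ? & ? & ? & ? & ->)].
  - exists 0%nat. intros n _. specialize (H1 _ (Sn_in n)). specialize (Sn_nn n).
    rewrite Rabs_left1 by lra. lra.
  - pose proof E_lim as EL. apply is_lim_seq_spec in EL.
    assert (Hd : 0 < Rmin (al / y) (1 - be / y)).
    { apply Rmin_glb_lt. apply Rdiv_lt_0_compat; lra.
      assert (be / y < 1). { apply Rmult_lt_reg_r with y. lra. unfold Rdiv. rewrite Rmult_assoc, Rinv_l; lra. }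
      lra. }
    destruct (EL (mkposreal _ Hd)) as [N HN]. exists N. intros n Hn.
    specialize (HN n Hn). simpl in HN. rewrite Rminus_0_r in HN.
    pose proof (E_bounds n).
    rewrite Rabs_pos_eq in HN by lra.
    assert (Ha1 : E n < al / y) by (eapply Rlt_le_trans; [exact HN| apply Rmin_l]).
    assert (Hb1 : E n < 1 - be / y) by (eapply Rlt_le_trans; [exact HN| apply Rmin_r]).
    assert (y * E n < al).
    { apply Rmult_lt_compat_l with (r := y) in Ha1; [|lra]. unfold Rdiv in Ha1.
      rewrite <- Rmult_assoc, (Rmult_comm y al), Rmult_assoc, Rinv_r, Rmult_1_r in Ha1; lra. }
    assert (be < y * (1 - E n)).
    { apply Rmult_lt_compat_l with (r := y) in Hb1; [|lra]. unfold Rdiv in Hb1.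
      rewrite Rmult_minus_distr_l, Rmult_1_r, <- Rmult_assoc, (Rmult_comm y be), Rmult_assoc, Rinv_r, Rmult_1_r in Hb1; lra. }
    pose proof (S_mono a q al be (y * E n) (y * (1 - E n)) ltac:(nra) ltac:(lra) ltac:(lra) ltac:(lra) ltac:(nra)).
    specialize (H1 _ (Sn_in n)).
    rewrite Rabs_left1 by lra. lra.
Qed.

Definition hB a q y := if Rlt_dec 0 y then (if Rlt_dec y 1 then gB a q y else 0) else 0.

Lemma lim_uniq (u : nat -> R) (l1 l2 : R) : is_lim_seq u l1 -> is_lim_seq u l2 -> l1 = l2.
Proof.
  intros H1 H2. apply is_lim_seq_unique in H1. apply is_lim_seq_unique in H2.
  rewrite H1 in H2. now inversion H2.
Qed.

Lemma gB_lo a q y : 0 < a -> 0 < q -> 0 < y <= 1 ->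
  is_lim_seq (fun n => gB a q (y * E n)) 0.
Proof.
  intros Ha Hq Hy.
  apply (is_lim_seq_le_le (fun _ => 0) _ (fun n => Rpower (E n) a)).
  - intros n. pose proof (E_bounds n). unfold gB. split.
    + apply Rmult_le_pos; left; apply rp_pos.
    + pose proof (rp_le1 (1 - y * E n) q ltac:(nra) ltac:(lra)).
      pose proof (Rle_Rpower_l (y * E n) (E n) a ltac:(lra) ltac:(nra)).
      pose proof (rp_pos (y * E n) a). nra.
  - apply is_lim_seq_const.
  - now apply rpE_lim.
Qed.

Lemma gB_hi a q y : 0 < a -> 0 < q -> 0 < y <= 1 ->
  is_lim_seq (fun n => gB a q (y * (1 - E n))) (hB a q y).
Proof.
  intros Ha Hq Hy. unfold hB. destruct (Rlt_dec 0 y) as [_|]; [|lra].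
  destruct (Rlt_dec y 1) as [Hy1|Hy1].
  - apply (is_lim_seq_continuous (gB a q)).
    + apply continuity_pt_filterlim.
      change (continuous (fun s => mult (Rpower s a) (Rpower (1 - s) q)) y).
      apply (continuous_mult (fun s => Rpower s a) (fun s => Rpower (1 - s) q)).
      apply cont_rp; lra. apply cont_rp1; lra.
    + assert (HL : is_lim_seq (fun n => y * (1 - E n)) (y * (1 - 0))).
      { apply is_lim_seq_mult'. apply is_lim_seq_const.
        apply is_lim_seq_minus'. apply is_lim_seq_const. apply E_lim. }
      replace (y * (1 - 0)) with y in HL by ring. exact HL.
  - assert (y = 1) by lra. subst y.
    apply (is_lim_seq_le_le (fun _ => 0) _ (fun n => Rpower (E n) q)).
    + intros n. pose proof (E_bounds n). unfold gB. split.
      * apply Rmult_le_pos; left; apply rp_pos.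
      * replace (1 - 1 * (1 - E n)) with (E n) by ring.
        pose proof (rp_le1 (1 * (1 - E n)) a ltac:(nra) ltac:(lra)).
        pose proof (rp_pos (E n) q). nra.
    + apply is_lim_seq_const.
    + now apply rpE_lim.
Qed.

Lemma J_rec a q y : 0 < a -> 0 < q -> 0 <= y <= 1 ->
  a * incbeta_int a q y - (a + q) * incbeta_int (a + 1) q y = hB a q y.
Proof.
  intros Ha Hq Hy. destruct (Rle_lt_dec y 0) as [Hy0|Hy0].
  - rewrite !J_zero by lra. unfold hB. destruct (Rlt_dec 0 y); [lra|]. ring.
  - assert (L1 : is_lim_seq (fun n => a * SI a q (y * E n) (y * (1 - E n))
                   - (a + q) * SI (a + 1) q (y * E n) (y * (1 - E n)))
                 (a * incbeta_int a q y - (a + q) * incbeta_int (a + 1) q y)).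
    { apply is_lim_seq_minus'; apply is_lim_seq_mult'; try apply is_lim_seq_const;
      apply J_lim; lra. }
    assert (L2 : is_lim_seq (fun n => a * SI a q (y * E n) (y * (1 - E n))
                   - (a + q) * SI (a + 1) q (y * E n) (y * (1 - E n))) (hB a q y - 0)).
    { apply (is_lim_seq_ext (fun n => gB a q (y * (1 - E n)) - gB a q (y * E n))).
      intros n. pose proof (E_bounds n). symmetry. apply S_ibp; nra.
      apply is_lim_seq_minus'. apply gB_hi; lra. apply gB_lo; lra. }
    rewrite (lim_uniq _ _ _ L1 L2). ring.
Qed.

Lemma I_bounds a q y : 0 < a -> 0 < q -> 0 <= y <= 1 -> 0 <= I_reg y a q <= 1.
Proof.
  intros Ha Hq Hy. unfold I_reg. pose proof (B_pos a q Ha Hq). unfold Beta in *.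
  pose proof (J_nonneg a q y Ha Hq). pose proof (J_le1 a q y Ha Hq ltac:(lra)).
  split. apply Rdiv_le_0_compat; lra.
  apply Rmult_le_reg_r with (incbeta_int a q 1). lra.
  unfold Rdiv. rewrite Rmult_assoc, Rinv_l by lra. lra.
Qed.

Lemma hB_succ a q y : 0 <= y -> hB (a + 1) q y = y * hB a q y.
Proof.
  intros Hy. unfold hB. destruct (Rlt_dec 0 y); [|ring]. destruct (Rlt_dec y 1); [|ring].
  unfold gB. rewrite (rp_succ y (a + 1)) by lra. replace (a + 1 - 1) with a by ring. ring.
Qed.

Lemma I_diff a q y : 0 < a -> 0 < q -> 0 <= y <= 1 ->
  I_reg y a q - I_reg y (a + 1) q = hB a q y / (a * Beta a q).
Proof.
  intros Ha Hq Hy. unfold I_reg.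
  pose proof (B_pos a q Ha Hq). pose proof (B_pos (a + 1) q ltac:(lra) Hq).
  assert (HB1 : Beta (a + 1) q = a * Beta a q / (a + q)).
  { pose proof (J_rec a q 1 Ha Hq ltac:(lra)) as R. unfold hB in R.
    destruct (Rlt_dec 0 1); [|lra]. destruct (Rlt_dec 1 1); [lra|].
    unfold Beta. field_simplify_eq; lra. }
  rewrite HB1. rewrite <- (J_rec a q y Ha Hq Hy). field.
  unfold Beta in *. lra.
Qed.

Lemma I_rec a q y : 0 < a -> 0 < q -> 0 <= y <= 1 ->
  (a + 1) * (I_reg y (a + 1) q - I_reg y (a + 1 + 1) q) = (a + q) * y * (I_reg y a q - I_reg y (a + 1) q).
Proof.
  intros Ha Hq Hy.
  rewrite I_diff by lra. rewrite I_diff by lra. rewrite hB_succ by lra.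
  pose proof (B_pos a q Ha Hq).
  assert (HB1 : Beta (a + 1) q = a * Beta a q / (a + q)).
  { pose proof (J_rec a q 1 Ha Hq ltac:(lra)) as R. unfold hB in R.
    destruct (Rlt_dec 0 1); [|lra]. destruct (Rlt_dec 1 1); [lra|].
    unfold Beta. field_simplify_eq; lra. }
  rewrite HB1. field. repeat split; lra.
Qed.

Ltac rring := match goal with |- ?a = ?b => change (@eq R a b); ring end.

Definition w (x : R) j := / INR (Factorial.fact j) * (x / 2) ^ j.

Lemma ser_plus (a b : nat -> R) la lb : is_series a la -> is_series b lb ->
  is_series (fun n => a n + b n) (la + lb).
Proof. intros. exact (is_series_plus a b la lb H H0). Qed.

Lemma ser_scal (a : nat -> R) c la : is_series a la -> is_series (fun n => c * a n) (c * la).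
Proof. intros. exact (is_series_scal c a la H). Qed.

Lemma ser_minus (a b : nat -> R) la lb : is_series a la -> is_series b lb ->
  is_series (fun n => a n - b n) (la - lb).
Proof. intros. exact (is_series_minus a b la lb H H0). Qed.

Lemma w_ser x : is_series (w x) (exp (x / 2)).
Proof.
  pose proof (is_exp_Reals (x / 2)) as H. unfold is_pseries in H.
  eapply is_series_ext. 2: exact H. intros n. unfold w. rewrite pow_n_pow, scalR. rring.
Qed.

Lemma w_pos x j : 0 <= x -> 0 <= w x j.
Proof.
  intros Hx. unfold w. apply Rmult_le_pos.
  left. apply Rinv_0_lt_compat, INR_fact_lt_0.
  apply pow_le. lra.
Qed.

Lemma w_shift x j : INR (S j) * w x (S j) = x / 2 * w x j.
Proof.
  unfold w. rewrite fact_simpl, mult_INR. simpl pow.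
  assert (0 < INR (Factorial.fact j)) by apply INR_fact_lt_0.
  assert (0 < INR (S j)) by (apply lt_0_INR; lia).
  field; repeat split; lra.
Qed.

Lemma zero_ser : is_series (fun _ : nat => 0) 0.
Proof.
  pose proof (ser_scal _ 0 _ (w_ser 0)) as H. rewrite Rmult_0_l in H.
  eapply is_series_ext. 2: exact H. intros; simpl; rring.
Qed.

Lemma ser_conv x (v : nat -> R) : 0 <= x -> (forall j, 0 <= v j <= 1) ->
  is_series (fun j => w x j * v j) (series_sum (fun j => / INR (Factorial.fact j) * (x / 2) ^ j * v j)).
Proof.
  intros Hx Hv.
  assert (Ex : ex_series (fun j => w x j * v j)).
  { apply (@ex_series_le R_AbsRing R_CompleteNormedModule _ (w x)). intros n. unfold norm; simpl. rewrite Rabs_pos_eq.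
    pose proof (w_pos x n Hx). specialize (Hv n). nra.
    apply Rmult_le_pos. now apply w_pos. apply Hv.
    eexists. apply w_ser. }
  destruct Ex as [l Hl]. unfold series_sum.
  assert (He : infinite_sum (fun j => / INR (Factorial.fact j) * (x / 2) ^ j * v j) l).
  { apply is_series_Reals. exact Hl. }
  pose proof (epsilon_spec (inhabits 0) (fun l => infinite_sum (fun j => / INR (Factorial.fact j) * (x / 2) ^ j * v j) l) (ex_intro _ l He)) as He2.
  simpl in He2. apply is_series_Reals in He2. exact He2.
Qed.

Lemma ser_shift x (v : nat -> R) L : is_series (fun j => w x j * v (S j)) L ->
  is_series (fun j => INR j * (w x j * v j)) (x / 2 * L).
Proof.
  intros H. apply is_series_decr_1.
  change (opp ?z) with (- z). change (plus ?a ?b) with (a + b). change (INR 0) with 0. rewrite Rmult_0_l, Ropp_0, Rplus_0_r.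
  pose proof (ser_scal _ (x / 2) _ H) as H2.
  eapply is_series_ext. 2: exact H2. intros n. cbv beta.
  transitivity (INR (S n) * w x (S n) * v (S n)). rewrite w_shift. rring. rring.
Qed.

Theorem mainTheorem7 (p q x y : R) :
  0 < p -> 0 < q -> 0 <= x -> 0 <= y <= 1 ->
  let c0 := (p + q) * y ^ 2 in
  let c1 := - y * (p + 1 - / 2 * x * y + y * (p + q)) in
  let c2 := y * (p + 1 - / 2 * x * y) - / 2 * x * y in
  let c3 := / 2 * x * y in
  (c3 * ncbeta (p + 3) q x y + c2 * ncbeta (p + 2) q x y
     + c1 * ncbeta (p + 1) q x y + c0 * ncbeta p q x y = 0) /\
  (c3 * ncbeta_c (p + 3) q x y + c2 * ncbeta_c (p + 2) q x y
     + c1 * ncbeta_c (p + 1) q x y + c0 * ncbeta_c p q x y = 0).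
Proof.
  intros Hp Hq Hx Hy c0 c1 c2 c3.
  assert (Bd : forall k j, 0 <= k -> 0 <= I_reg y (p + k + INR j) q <= 1).
  { intros k j Hk. apply I_bounds; auto. pose proof (pos_INR j). lra. }
  assert (Bd0 : forall j, 0 <= I_reg y (p + INR j) q <= 1).
  { intros j. apply I_bounds; auto. pose proof (pos_INR j). lra. }
  pose proof (ser_conv x (fun j => I_reg y (p + INR j) q) Hx Bd0) as H0.
  pose proof (ser_conv x (fun j => I_reg y (p + 1 + INR j) q) Hx (fun j => Bd 1 j ltac:(lra))) as H1.
  pose proof (ser_conv x (fun j => I_reg y (p + 2 + INR j) q) Hx (fun j => Bd 2 j ltac:(lra))) as H2.
  pose proof (ser_conv x (fun j => I_reg y (p + 3 + INR j) q) Hx (fun j => Bd 3 j ltac:(lra))) as H3.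
  cbv beta in H0, H1, H2, H3.
  set (A0 := series_sum (fun j => / INR (Factorial.fact j) * (x / 2) ^ j * I_reg y (p + INR j) q)) in *.
  set (A1 := series_sum (fun j => / INR (Factorial.fact j) * (x / 2) ^ j * I_reg y (p + 1 + INR j) q)) in *.
  set (A2 := series_sum (fun j => / INR (Factorial.fact j) * (x / 2) ^ j * I_reg y (p + 2 + INR j) q)) in *.
  set (A3 := series_sum (fun j => / INR (Factorial.fact j) * (x / 2) ^ j * I_reg y (p + 3 + INR j) q)) in *.
  assert (Sh0 : is_series (fun j => INR j * (w x j * I_reg y (p + INR j) q)) (x / 2 * A1)).
  { apply (ser_shift x (fun j => I_reg y (p + INR j) q)). eapply is_series_ext. 2: exact H1.
    intros n. cbv beta. rewrite S_INR. replace (p + (INR n + 1)) with (p + 1 + INR n) by ring. reflexivity. }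
  assert (Sh1 : is_series (fun j => INR j * (w x j * I_reg y (p + 1 + INR j) q)) (x / 2 * A2)).
  { apply (ser_shift x (fun j => I_reg y (p + 1 + INR j) q)). eapply is_series_ext. 2: exact H2.
    intros n. cbv beta. rewrite S_INR. replace (p + 1 + (INR n + 1)) with (p + 2 + INR n) by ring. reflexivity. }
  assert (Sh2 : is_series (fun j => INR j * (w x j * I_reg y (p + 2 + INR j) q)) (x / 2 * A3)).
  { apply (ser_shift x (fun j => I_reg y (p + 2 + INR j) q)). eapply is_series_ext. 2: exact H3.
    intros n. cbv beta. rewrite S_INR. replace (p + 2 + (INR n + 1)) with (p + 3 + INR n) by ring. reflexivity. }
  pose proof (ser_minus _ _ _ _
     (ser_plus _ _ _ _ (ser_scal _ (p + 1) _ (ser_minus _ _ _ _ H1 H2)) (ser_minus _ _ _ _ Sh1 Sh2))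
     (ser_plus _ _ _ _ (ser_scal _ ((p + q) * y) _ (ser_minus _ _ _ _ H0 H1)) (ser_scal _ y _ (ser_minus _ _ _ _ Sh0 Sh1)))) as HC.
  assert (HZ : is_series (fun _ : nat => 0)
     ((p + 1) * (A1 - A2) + (x / 2 * A2 - x / 2 * A3) - ((p + q) * y * (A0 - A1) + y * (x / 2 * A1 - x / 2 * A2)))).
  { eapply is_series_ext. 2: exact HC. intros j. cbv beta. match goal with |- ?a = ?b => change (@eq R a b) end.
    pose proof (pos_INR j).
    pose proof (I_rec (p + INR j) q y ltac:(lra) Hq Hy) as R.
    replace (p + INR j + 1) with (p + 1 + INR j) in R by ring.
    replace (p + 1 + INR j + 1) with (p + 2 + INR j) in R by ring.
    transitivity (w x j * ((p + 1 + INR j) * (I_reg y (p + 1 + INR j) q - I_reg y (p + 2 + INR j) q)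
       - (p + INR j + q) * y * (I_reg y (p + INR j) q - I_reg y (p + 1 + INR j) q))). ring.
    rewrite R. ring. }
  pose proof (is_series_unique _ _ HZ) as U1. pose proof (is_series_unique _ _ zero_ser) as U2.
  rewrite U2 in U1. clear - U1.
  unfold ncbeta_c, ncbeta. fold A0 A1 A2 A3.
  replace (p + 0 + 1 + 1 + 1) with (p + 3) by ring.
  unfold c0, c1, c2, c3. split.
  - transitivity (exp (- x / 2) * (- y) * ((p + 1) * (A1 - A2) + (x / 2 * A2 - x / 2 * A3) - ((p + q) * y * (A0 - A1) + y * (x / 2 * A1 - x / 2 * A2)))).
    field. rewrite <- U1. ring.
  - transitivity (- (exp (- x / 2) * (- y) * ((p + 1) * (A1 - A2) + (x / 2 * A2 - x / 2 * A3) - ((p + q) * y * (A0 - A1) + y * (x / 2 * A1 - x / 2 * A2))))).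
    field. rewrite <- U1. ring.
Qed.
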